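(* Let $\Omega_1\subseteq\mathbb C$ be path-connected and $\Omega_2\subseteq\mathbb C$ bounded. If $T:\mathbb C_n[z]\to\mathbb C[z]$ is a linear operator mapping every polynomial of degree exactly $n$ in $\pi_n(\Omega_1)$ into $\pi(\Omega_2)$ (in particular never to $0$), then all polynomials $T(f)$, with $f$ of degree exactly $n$ in $\pi_n(\Omega_1)$, have the same degree.
   Context: For $\Omega\subseteq\mathbb C$, $\pi(\Omega)$ is the set of non-zero univariate complex polynomials all of whose zeros lie in $\Omega$ (non-zero constants included), and $\pi_n(\Omega)$ its subset of polynomials of degree at most $n$. *)

(* Defs.v *)
From HB Require Import structures.
From mathcomp Require Import all_boot all_order all_algebra.
From mathcomp Require Import all_classical all_reals all_analysis.
From mathcomp Require Import complex.
Set Implicit Arguments. Unset Strict Implicit. Unset Printing Implicit Defensive.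
Import Order.TTheory GRing.Theory Num.Theory.
Import numFieldTopology.Exports numFieldNormedType.Exports.
Local Open Scope classical_set_scope.
Local Open Scope ring_scope.
Local Open Scope complex_scope.

(* Equip C = R[i] with its usual (norm) topology: copy of the metric structure
   that mathcomp-analysis puts on any numFieldType, via the R^o alias.
   (Balls are ball x e = [set y | `|x - y| < e].) *)
HB.instance Definition _ (R : rcfType) := PseudoPointedMetric.copy R[i] (R[i])^o.

Definition pi_set (R : rcfType) (Om : set R[i]) : set {poly R[i]} :=
  [set p | p != 0 /\ forall z, root p z -> Om z].

Definition pi_n_set (R : rcfType) (n : nat) (Om : set R[i]) : set {poly R[i]} :=
  [set p | pi_set Om p /\ (size p <= n.+1)%N].

Definition path_connected_set (R : realType) (Om : set R[i]) : Prop :=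
  forall x y, Om x -> Om y ->
    exists g : R -> R[i],
      {within (`[0, 1]%classic : set R), continuous g} /\ g 0 = x /\ g 1 = y /\
      (forall t, t \in `[0, 1] -> Om (g t)).

Definition bounded_cset (R : realType) (Om : set R[i]) : Prop :=
  exists M : R, forall z, Om z -> `|z| <= M%:C.

Definition linear_on_Cn (R : rcfType) (n : nat) (T : {poly R[i]} -> {poly R[i]}) :=
  forall (a : R[i]) (p q : {poly R[i]}), (size p <= n.+1)%N -> (size q <= n.+1)%N ->
    T (a *: p + q) = a *: T p + T q.

(* Main.v *)
Require Import Defs.
From HB Require Import structures.
From mathcomp Require Import all_boot all_order all_algebra.
From mathcomp Require Import all_classical all_reals all_analysis.
From mathcomp Require Import complex.
From mathcomp Require Import ring lra.
Import Order.TTheory GRing.Theory Num.Theory.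
Import numFieldTopology.Exports numFieldNormedType.Exports.
Local Open Scope classical_set_scope.
Local Open Scope ring_scope.
Local Open Scope complex_scope.
Lemma prod_coef_bound (F : numClosedFieldType) (M : F) (s : seq F) :
  0 <= M -> (forall z, z \in s -> `|z| <= M) ->
  forall k, `|(\prod_(z <- s) ('X - z%:P))`_k| <= (1 + M) ^+ size s.
Proof.
move=> M0; elim: s => [|a s IH] Hs k.
  by rewrite big_nil coefC expr0; case: (k == 0)%N; rewrite ?normr1 ?normr0.
rewrite big_cons mulrC mulrBr coefB coefMX coefMC /= exprS.
have IH' := IH (fun z zs => Hs z (mem_behead (s:=a::s) zs)).
have Ha : `|a| <= M by apply: Hs; rewrite mem_head.
have K0 : 0 <= (1 + M) ^+ size s by rewrite exprn_ge0 // addr_ge0.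
apply: le_trans (ler_normB _ _) _.
rewrite mulrDl mul1r; apply: lerD.
  case: (k == 0)%N; first by rewrite normr0.
  exact: IH'.
rewrite normrM mulrC; apply: ler_pM => //.
Qed.

Lemma coef_bound (F : numClosedFieldType) (M : F) (p : {poly F}) :
  0 <= M -> p != 0 -> (forall z, root p z -> `|z| <= M) ->
  forall k, `|p`_k| <= `|lead_coef p| * (1 + M) ^+ (size p).-1.
Proof.
move=> M0 p0 Hr k; have [s Hs] := closed_field_poly_normal p.
have lc0 : lead_coef p != 0 by rewrite lead_coef_eq0.
have Hsz : (size p).-1 = size s.
  by rewrite Hs size_scale // size_prod_XsubC.
rewrite Hsz {1}Hs coefZ normrM; apply: ler_wpM2l => //.
apply: prod_coef_bound => // z zs; apply: Hr.
by rewrite Hs rootZ // root_prod_XsubC.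
Qed.
Lemma key_lemma (F : numClosedFieldType) (Q B : {poly F}) (M : F) :
  0 <= M -> Q != 0 -> (size Q < size B)%N ->
  exists2 d : F, 0 < d & forall e : F, 0 < `|e| -> `|e| < d ->
    exists z, root (Q - e *: B) z /\ ~ (`|z| <= M).
Proof.
move=> M0 Q0 sQB.
set K := (1 + M) ^+ (size B).-1.
set j := (size Q).-1.
set Y := `|lead_coef B| * K + `|B`_j|.
have K0 : 0 <= K by rewrite exprn_ge0 // addr_ge0.
have Y0 : 0 <= Y by rewrite addr_ge0 // mulr_ge0.
have X0 : 0 < Y + 1 by rewrite ltr_wpDl.
have qe0 : 0 < `|lead_coef Q| by rewrite normr_gt0 lead_coef_eq0.
exists (`|lead_coef Q| / (Y + 1)); first by rewrite divr_gt0.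
move=> e e0 ed; apply: contrapT => Hb.
have e0' : e != 0 by rewrite -normr_gt0.
have sB : (size Q < size (- (e *: B)))%N by rewrite size_polyN size_scale.
have HP : Q - e *: B = - (e *: B) + Q by rewrite addrC.
have P0 : Q - e *: B != 0.
  by rewrite -size_poly_gt0 HP size_polyDl //; apply: leq_ltn_trans sB.
have Hr : forall z, root (Q - e *: B) z -> `|z| <= M.
  move=> z rz; apply: contrapT => nz; apply: Hb; by exists z.
have := @coef_bound _ M _ M0 P0 Hr j.
rewrite HP lead_coefDl // size_polyDl // lead_coefN lead_coefZ size_polyN size_scale //.
rewrite -HP coefB coefZ -/K normrN normrM => Hj.
have : `|lead_coef Q| <= `|e| * Y.
  have -> : lead_coef Q = (Q`_j - e * B`_j) + e * B`_j by rewrite subrK.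
  apply: le_trans (ler_normD _ _) _.
  rewrite /Y mulrDr mulrA normrM; exact: lerD.
have : `|e| * Y < `|lead_coef Q|.
  apply: le_lt_trans (_ : `|e| * Y <= `|e| * (Y + 1)) _.
    by rewrite [_ * (Y + 1)]mulrDr mulr1 lerDl normr_ge0.
  rewrite -[`|lead_coef Q|](divfK (x := Y + 1)) ?gt_eqF // ltr_pM2r //.

move=> h1 h2; have := lt_le_trans h1 h2; by rewrite ltxx.
Qed.
Lemma normC_real (R : realType) (c : R) : `|c%:C| = `|c|%:C.
Proof. by rewrite normc_def /= expr0n /= addr0 sqrtr_sqr. Qed.

Lemma Re_norm (R : realType) (z : R[i]) : (complex.Re (`|z|%R : R[i]))%:C = `|z|.
Proof. by rewrite RRe_real // normr_real. Qed.

Lemma cont_h (R : realType) (w0 : R[i]) :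
  continuous (fun z : R[i] => complex.Re (`|z - w0| : R[i])).
Proof.
move=> x; apply/(@cvgrPdist_lt _ _ _ _ (nbhs_filter x)) => eps eps0.
have H := proj1 (@cvgrPdist_lt _ _ _ _ (nbhs_filter x) (fun z : (R[i])^o => z) x) (@cvg_id _ _).
have := H eps%:C; rewrite ltcR => /(_ eps0).
apply: filterS => t ht.
rewrite -ltcR -normC_real rmorphB /= !Re_norm.
apply: le_lt_trans (ler_dist_dist _ _) _.
by rewrite opprB addrA subrK.
Qed.

Lemma cont_phi (R : realType) (g : R -> R[i]) (w0 : R[i]) :
  {within (`[0, 1]%classic : set R), continuous g} ->
  {within (`[0, 1]%classic : set R), continuous (fun t => complex.Re (`|g t - w0| : R[i]))}.
Proof.
move=> gc x.
exact: (continuous_comp (gc x) (@cont_h R w0 _)).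
Qed.

Lemma find_t (R : realType) (g : R -> R[i]) (w0 : R[i]) (t0 t1 : R) (d : R[i]) :
  {within (`[0, 1]%classic : set R), continuous g} ->
  (t0 = 0 /\ t1 = 1) \/ (t0 = 1 /\ t1 = 0) -> g t0 = w0 -> g t1 != w0 -> 0 < d ->
  exists t, t \in `[0, (1:R)] /\ 0 < `|g t - w0| /\ `|g t - w0| < d.
Proof.
move=> gc ht g0 g1 d0.
set phi := fun t => complex.Re (`|g t - w0| : R[i]).
have phiE t : (phi t)%:C = `|g t - w0| by rewrite /phi Re_norm.
have p0 : phi t0 = 0 by apply: complexI; rewrite phiE g0 subrr normr0.
have p1 : 0 < phi t1 by rewrite -ltcR phiE normr_gt0 subr_eq0.
have dE : (complex.Re d)%:C = d by rewrite RRe_real // gtr0_real.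
have dR0 : 0 < complex.Re d by rewrite -ltcR dE.
set v := Num.min (complex.Re d) (phi t1) / 2.
have v0 : 0 < v by rewrite divr_gt0 // lt_min dR0 p1.
have vm : v < Num.min (complex.Re d) (phi t1).
  by rewrite /v ltr_pdivrMr // mulr_natr mulr2n ltrDr lt_min dR0 p1.
have /andP [vd vp] : (v < complex.Re d) && (v < phi t1) by rewrite -lt_min.
have [t tI phit] : exists2 t, t \in `[0, (1:R)] & phi t = v.
  apply: IVT; first exact: ler01.
    exact: cont_phi.
  case: ht => [[e0 e1]|[e0 e1]]; rewrite -e0 -e1 p0.
    by rewrite ge_min le_max (ltW v0) (ltW vp) orbT.
  by rewrite ge_min le_max (ltW v0) (ltW vp) orbT.
exists t; split => //; rewrite -phiE phit ltcR; split => //.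
by rewrite -dE ltcR.
Qed.

Lemma swap_lemma (R : realType) n (Om1 Om2 : set R[i]) (T : {poly R[i]} -> {poly R[i]}) :
  path_connected_set Om1 -> bounded_cset Om2 -> linear_on_Cn n T ->
  (forall f : {poly R[i]}, size f = n.+1 -> pi_n_set n Om1 f -> pi_set Om2 (T f)) ->
  forall (q : {poly R[i]}) a b, q != 0 -> size q = n ->
  (forall z, root q z -> Om1 z) -> Om1 a -> Om1 b ->
  size (T (q * ('X - a%:P))) = size (T (q * ('X - b%:P))).
Proof.
move=> pc [M HM] lin HT q a b q0 sq rq Oa Ob.
have [->//|ab] := eqVneq a b.
have [g [gc [g0 [g1 gI]]]] := pc a b Oa Ob.
set A := T (q * 'X); set B := T q.
have sqX : size (q * 'X) = n.+1 by rewrite size_mulX // sq.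
have TE w : T (q * ('X - w%:P)) = A - w *: B.
  have -> : q * ('X - w%:P) = (- w) *: q + q * 'X.
    by rewrite mulrBr [q * w%:P]mulrC mul_polyC scaleNr addrC.
  by rewrite lin ?sq ?sqX // scaleNr addrC.
have Hs w : Om1 w -> size (q * ('X - w%:P)) = n.+1 /\ pi_n_set n Om1 (q * ('X - w%:P)).
  move=> Ow.
  have sz : size (q * ('X - w%:P)) = n.+1.
    by rewrite size_mul // ?polyXsubC_eq0 // size_XsubC sq addn2.
  split => //; split; last by rewrite sz.
  split; first by rewrite mulf_neq0 // polyXsubC_eq0.
  by move=> z; rewrite rootM root_XsubC => /orP [/rq|/eqP ->].
have Hpi w : Om1 w -> pi_set Om2 (A - w *: B).
  by move=> Ow; rewrite -TE; case: (Hs w Ow) => *; apply: HT.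
set Mc := `|M%:C|.
have HMc : forall w z, Om1 w -> root (A - w *: B) z -> `|z| <= Mc.
  move=> w z Ow rz; case: (Hpi w Ow) => _ /(_ z rz) /HM h.
  apply: le_trans h _; apply: real_ler_norm; by rewrite complex_real.
have Mc0 : 0 <= Mc by apply: normr_ge0.
set D := maxn (size A) (size B).
have claim : forall t0 t1 : R, (t0 = 0 /\ t1 = 1) \/ (t0 = 1 /\ t1 = 0) ->
    g t1 != g t0 -> size (A - g t0 *: B) = D.
  move=> t0 t1 ht gne; set w0 := g t0.
  have Ow0 : Om1 w0.
    by apply: gI; case: ht => [[-> _]|[-> _]]; rewrite in_itv /= lexx ler01.
  have leD : (size (A - w0 *: B)%R <= D)%N.
    apply: leq_trans (size_polyD _ _) _.
    rewrite size_polyN geq_max leq_maxl /=.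
    exact: leq_trans (size_scale_leq _ _) (leq_maxr _ _).
  apply/eqP; rewrite eqn_leq leD /= leqNgt; apply/negP => ltD.
  have Q0 : A - w0 *: B != 0 by case: (Hpi w0 Ow0).
  have sB : (size (A - w0 *: B)%R < size B)%N.
    case: (ltnP (size B) (size A)) => hBA.
      exfalso; move: ltD; rewrite size_polyDl; last first.
        by rewrite size_polyN; exact: leq_ltn_trans (size_scale_leq _ _) hBA.
      by rewrite /D (maxn_idPl (ltnW hBA)) ltnn.
    by move: ltD; rewrite /D (maxn_idPr hBA).
  have [d d0 Hd] := @key_lemma _ _ _ Mc Mc0 Q0 sB.
  have [t [tI [p0 pd]]] := @find_t _ g w0 t0 t1 d gc ht (erefl _) gne d0.
  have [z [rz nz]] := Hd (g t - w0) p0 pd.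
  apply: nz; apply: (HMc (g t)); first exact: gI.
  suff -> : A - g t *: B = A - w0 *: B - (g t - w0) *: B by [].
  by rewrite scalerBl opprB addrA subrK.
have h0 : size (A - g 0 *: B) = D.
  by apply: (claim 0 1); [left | rewrite g0 g1 eq_sym].
have h1 : size (A - g 1 *: B) = D.
  by apply: (claim 1 0); [right | rewrite g0 g1].
by rewrite !TE -g0 -g1 h0 h1.
Qed.

Lemma chain_lemma (R : realType) n (Om1 Om2 : set R[i]) (T : {poly R[i]} -> {poly R[i]}) :
  path_connected_set Om1 -> bounded_cset Om2 -> linear_on_Cn n T ->
  (forall f : {poly R[i]}, size f = n.+1 -> pi_n_set n Om1 f -> pi_set Om2 (T f)) ->
  forall (s t u : seq R[i]), size s = size t -> (size u + size s)%N = n ->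
  (forall z, z \in s -> Om1 z) -> (forall z, z \in t -> Om1 z) ->
  (forall z, z \in u -> Om1 z) ->
  size (T (\prod_(z <- u ++ s) ('X - z%:P))) = size (T (\prod_(z <- u ++ t) ('X - z%:P))).
Proof.
move=> pc bd lin HT; elim=> [|a s IH] [|b t] u //= hst hn Hs Ht Hu.
have e1 : \prod_(z <- u ++ a :: s) ('X - z%:P)
    = (\prod_(z <- u ++ s) ('X - z%:P)) * ('X - a%:P).
  by rewrite !big_cat big_cons /=; ring.
have e2 : \prod_(z <- u ++ b :: t) ('X - z%:P)
    = \prod_(z <- (b :: u) ++ t) ('X - z%:P).
  by rewrite /= !big_cons !big_cat /= big_cons; ring.
have e3 : \prod_(z <- (b :: u) ++ s) ('X - z%:P)
    = (\prod_(z <- u ++ s) ('X - z%:P)) * ('X - b%:P).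
  by rewrite /= big_cons big_cat /=; ring.
rewrite e1 e2 (@swap_lemma R n Om1 Om2 T pc bd lin HT _ a b) //.
- rewrite -e3; apply: IH => //.
  + by case: hst.
  + by rewrite /= -hn addSnnS.
  + by move=> z zs; apply: Hs; rewrite inE zs orbT.
  + by move=> z zt; apply: Ht; rewrite inE zt orbT.
  + by move=> z; rewrite inE => /orP [/eqP -> |]; [apply: Ht; rewrite mem_head | apply: Hu].
- by rewrite monic_neq0 // monic_prod_XsubC.
- by rewrite size_prod_XsubC size_cat -hn /= addnS.
- move=> z; rewrite root_prod_XsubC mem_cat => /orP [/Hu //|zs].
  by apply: Hs; rewrite inE zs orbT.
- by apply: Hs; rewrite mem_head.
- by apply: Ht; rewrite mem_head.
Qed.

Lemma reduce_prod (R : realType) n (Om1 : set R[i]) (T : {poly R[i]} -> {poly R[i]}) :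
  linear_on_Cn n T -> forall f : {poly R[i]}, size f = n.+1 -> pi_n_set n Om1 f ->
  exists s : seq R[i], [/\ size s = n, forall z, z \in s -> Om1 z &
     size (T f) = size (T (\prod_(z <- s) ('X - z%:P)))].
Proof.
move=> lin f sf [[f0 rf] _].
have T0 : T 0 = 0.
  have := lin 1 0 0; rewrite scale1r addr0 size_poly0 => /(_ isT isT) h.
  by apply: (@addrI _ (T 0)); rewrite scale1r in h; rewrite -h addr0.
have [s Hs] := closed_field_poly_normal f.
have lc0 : lead_coef f != 0 by rewrite lead_coef_eq0.
have ss : size s = n.
  by have := sf; rewrite {1}Hs size_scale // size_prod_XsubC => [[]].
exists s; split => //.
  by move=> z zs; apply: rf; rewrite Hs rootZ // root_prod_XsubC.
rewrite {1}Hs.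
have := lin (lead_coef f) (\prod_(z <- s) ('X - z%:P)) 0.
rewrite addr0 T0 addr0 size_poly0 size_prod_XsubC ss => /(_ (leqnn _) isT) ->.
by rewrite size_scale.
Qed.

Theorem mainTheorem19 (R : realType) (n : nat) (Om1 Om2 : set R[i])
  (T : {poly R[i]} -> {poly R[i]}) :
  path_connected_set Om1 -> bounded_cset Om2 -> linear_on_Cn n T ->
  (forall f : {poly R[i]}, size f = n.+1 -> pi_n_set n Om1 f -> pi_set Om2 (T f)) ->
  forall f g : {poly R[i]}, size f = n.+1 -> pi_n_set n Om1 f ->
              size g = n.+1 -> pi_n_set n Om1 g ->
              size (T f) = size (T g).
Proof.
move=> pc bd lin HT f g sf pf sg pg.
have [s [ss Hs ->]] := @reduce_prod R n Om1 T lin f sf pf.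
have [t [st Ht ->]] := @reduce_prod R n Om1 T lin g sg pg.
have := @chain_lemma R n Om1 Om2 T pc bd lin HT s t [::].
by rewrite /= ss st add0n; apply.
Qed.
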